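(* Every xor-set $\mathcal{X}\subseteq\mathbb{Z}_2^\omega$ is a maximal (with respect to inclusion) thin set. In particular, $\mathcal{X}$ is not Borel.
   Context: $\mathbb{Z}_2^\omega$ is the Cantor cube of infinite binary sequences indexed by $\omega=\{0,1,2,\dots\}$, with the product topology. A set $T\subseteq\mathbb{Z}_2^\omega$ is thin if for every $n\in\omega$ the map $x\mapsto x|_{\omega\setminus\{n\}}$ is injective on $T$. For $x\in\mathbb{Z}_2^\omega$ and $n\in\omega$, $x^{\#n}$ is the sequence obtained from $x$ by flipping the $n$-th coordinate. A set $\mathcal{X}\subseteq\mathbb{Z}_2^\omega$ is a xor-set if for every $n\in\omega$ and $x\in\mathbb{Z}_2^\omega$: $x\in\mathcal{X}\iff x^{\#n}\notin\mathcal{X}$. *)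

(* Defs.v *)
From mathcomp Require Import all_boot all_order all_algebra.
From mathcomp Require Import all_classical all_reals all_analysis.
Set Implicit Arguments.
Unset Strict Implicit.
Unset Printing Implicit Defensive.
Local Open Scope classical_set_scope.

(* The Cantor cube Z_2^omega = bool^nat with the product topology
   (mathcomp-analysis' [cantor_space]). *)

Definition flip (x : cantor_space) (n : nat) : cantor_space :=
  fun m => if m == n then ~~ x m else x m.

Definition thin (T : set cantor_space) : Prop :=
  forall n : nat, forall x y : cantor_space, T x -> T y ->
    (forall m : nat, m <> n -> x m = y m) -> x = y.

Definition xor_set (X : set cantor_space) : Prop :=
  forall (n : nat) (x : cantor_space), X x <-> ~ X (flip x n).

Definition maximal_thin (X : set cantor_space) : Prop :=
  thin X /\ forall Y : set cantor_space, thin Y -> X `<=` Y -> Y = X.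

Definition borel_cantor (A : set cantor_space) : Prop :=
  <<s [set: cantor_space], open >> A.

(* Main.v *)
Require Import Defs.
From mathcomp Require Import all_boot all_order all_algebra.
From mathcomp Require Import all_classical all_reals all_analysis.
Local Open Scope classical_set_scope.

Definition cyl (x : cantor_space) (k : nat) : set cantor_space :=
  [set y | forall i, (i < k)%N -> y i = x i].

Lemma cyl_filter (x : cantor_space) : Filter (filter_from [set: nat] (cyl x)).
Proof.
apply: filter_from_filter; first by exists 0%N.
move=> a b _ _; exists (maxn a b) => //.
move=> y Hy; split => i Hi; apply: Hy; rewrite leq_max Hi ?orbT //.
Qed.

Lemma cyl_cvg (x : cantor_space) : filter_from [set: nat] (cyl x) --> x.
Proof.
have FF := cyl_filter x.
apply/cvg_sup => i A /= [_ [[B Bop <-] Bfs sBfA]].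
exists i.+1 => // y Hy; apply: sBfA => /=.
by rewrite (Hy i (ltnSn i)).
Qed.

Lemma open_cyl {U : set cantor_space} {x} : open U -> U x -> exists k, cyl x k `<=` U.
Proof.
move=> oU Ux.
have := @cyl_cvg x U (open_nbhs_nbhs (conj oU Ux)).
by case=> k _ H; exists k.
Qed.

Lemma nbhs_cyl (x : cantor_space) k : nbhs x (cyl x k).
Proof.
elim: k => [|k IH].
  by apply: (@filterS _ _ _ setT); [move=> y _ i|exact: filterT].
have H2 : nbhs x ((fun f : cantor_space => f k) @^-1` [set x k]).
  apply: (@proj_continuous nat (fun _ => bool) k x).
  by rewrite nbhs_principalE; apply/principal_filterP.
apply: filterS (filterI IH H2) => y [H1 H3] i; rewrite ltnS leq_eqVlt.
by case/orP => [/eqP->|/H1] //.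
Qed.

Lemma cyl_open_crit (V : set cantor_space) :
  (forall x, V x -> exists k, cyl x k `<=` V) -> open V.
Proof.
move=> H; rewrite openE => x Vx; have [k Hk] := H x Vx.
exact: filterS Hk (nbhs_cyl x k).
Qed.

Definition nwd (F : set cantor_space) : Prop :=
  forall x k, exists y j, cyl y j `<=` cyl x k /\ (forall z, cyl y j z -> ~ F z).

Definition meager (M : set cantor_space) : Prop :=
  exists F : nat -> set cantor_space, (forall n, nwd (F n)) /\ M `<=` \bigcup_n F n.

Lemma meager_sub A B : A `<=` B -> meager B -> meager A.
Proof. by move=> AB [F [HF BF]]; exists F; split => //; apply: subset_trans BF. Qed.

Lemma nwd_meager F : nwd F -> meager F.
Proof. by move=> H; exists (fun _ => F); split => // x Fx; exists 0%N. Qed.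

Lemma meager_bigU (M : nat -> set cantor_space) :
  (forall m, meager (M m)) -> meager (\bigcup_m M m).
Proof.
move=> H; have [F HF] := choice H.
exists (fun n => match (unpickle n : option (nat * nat)) with
                 | Some (m, k) => F m k | None => set0 end); split.
  move=> n; case: (unpickle n) => [[m k]|].
    exact: (HF m).1 k.
  by move=> x k; exists x, k; split => // z _ [].
move=> x [m _ Mx]; have [k _ Fx] := (HF m).2 x Mx.
by exists (pickle (m, k)) => //; rewrite pickleK.
Qed.

Lemma meagerU A B : meager A -> meager B -> meager (A `|` B).
Proof.
move=> HA HB.
have := @meager_bigU (fun n => if n is 0%N then A else B).
move=> /(_ _)/meager_sub; apply.
  by move=> x [Ax|Bx]; [exists 0%N|exists 1%N].
by case.
Qed.

Lemma cyl_self x k : cyl x k x.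
Proof. by []. Qed.

Lemma cyl_trans {x y k} : cyl x k y -> cyl y k `<=` cyl x k.
Proof. by move=> H z Hz i Hi; rewrite Hz // H. Qed.

Lemma cyl_mono x j k : (k <= j)%N -> cyl x j `<=` cyl x k.
Proof. by move=> kj z Hz i Hi; apply: Hz; apply: leq_trans kj. Qed.

Lemma baire x0 k0 : ~ meager (cyl x0 k0).
Proof.
case=> F [HF sub].
have step : forall (p : nat * (cantor_space * nat)), exists q : cantor_space * nat,
   [/\ cyl q.1 q.2 `<=` cyl p.2.1 p.2.2, (forall z, cyl q.1 q.2 z -> ~ F p.1 z)
     & (p.2.2 < q.2)%N].
  case=> n [x k]; have [y [j [H1 H2]]] := HF n x k.
  exists (y, maxn j k.+1) => /=; split.
  - by apply: subset_trans H1; apply: cyl_mono; rewrite leq_maxl.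
  - by move=> z Hz; apply: H2; apply: cyl_mono Hz; rewrite leq_maxl.
  - by rewrite leq_max ltnSn orbT.
have [st Hst] := choice step.
pose c := fix c n := if n is n'.+1 then st (n', c n') else (x0, k0).
have cS n : c n.+1 = st (n, c n) by [].
have kge n : (n <= (c n).2)%N.
  elim: n => [//|n IH]; rewrite cS; have [_ _ h] := Hst (n, c n).
  exact: (leq_ltn_trans IH h).
have nest n m : (n <= m)%N -> cyl (c m).1 (c m).2 `<=` cyl (c n).1 (c n).2.
  move=> /subnK <-; elim: (m - n)%N => [//|d IH].
  rewrite addSn cS; have [h _ _] := Hst (d + n, c (d + n))%N.
  exact: subset_trans h IH.
pose z : cantor_space := fun i => (c i.+1).1 i.
have zin n : cyl (c n).1 (c n).2 z.
  move=> i Hi; rewrite /z.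
  case: (leqP i.+1 n) => h.
    symmetry; apply: (nest _ _ h (c n).1 (cyl_self _ _)); exact: kge i.+1.
  exact: (nest n i.+1 (ltnW h) (c i.+1).1 (cyl_self _ _) i Hi).
have [n _ Fz] := sub z (zin 0%N).
have [_ h _] := Hst (n, c n); apply: (h z) => //.
by rewrite -cS; apply: zin.
Qed.

Lemma flipK (y : cantor_space) n : flip (flip y n) n = y.
Proof. by apply: funext => i; rewrite /flip; case: eqP => // _; rewrite negbK. Qed.

Lemma cyl_flip n {a b j} : cyl a j b -> cyl (flip a n) j (flip b n).
Proof. by move=> H i Hi; rewrite /flip H. Qed.

Lemma meager_flip M n : meager M -> meager (flip^~ n @^-1` M).
Proof.
case=> F [HF sub]; exists (fun m => flip^~ n @^-1` F m); split; last first.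
  by move=> z Mz; have [m _ Fm] := sub _ Mz; exists m.
move=> m x k; have [y [j [H1 H2]]] := HF m (flip x n) k.
exists (flip y n), j; split.
  move=> z Hz; have := cyl_flip n Hz; rewrite flipK => /H1 /(@cyl_flip n).
  by rewrite !flipK.
by move=> z Hz; apply: H2; have := cyl_flip n Hz; rewrite flipK.
Qed.

Definition BP (A : set cantor_space) : Prop :=
  exists U, open U /\ meager ((A `\` U) `|` (U `\` A)).

Lemma BP_sigma : sigma_algebra setT BP.
Proof.
split.
- exists set0; split; first exact: open0.
  apply: (@meager_sub _ (set0)); first by move=> x [[]|[]].
  by apply: nwd_meager => x k; exists x, k; split => // z _ [].
- move=> A [U [oU mU]].
  pose V := [set x | exists k, forall y, cyl x k y -> ~ U y].
  have oV : open V.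
    apply: cyl_open_crit => x [k Hk]; exists k => y Hy; exists k => z Hz.
    by apply: Hk; apply: cyl_trans Hz.
  exists V; split => //.
  apply: (@meager_sub _ (((A `\` U) `|` (U `\` A)) `|` (~` U `\` V))).
    move=> x [[[_ nAx] nVx]|[[k Hk] nnAx]].
      case: (pselect (U x)) => Ux; first by left; right; split.
      by right.
    have Ax : A x by apply: contrapT => nA; apply: nnAx.
    by left; left; split => //; apply: Hk.
  apply: meagerU => //; apply: nwd_meager => x k.
  case: (pselect (exists y, cyl x k y /\ U y)) => [[y [Hy Uy]]|nex].
    have [j Hj] := open_cyl oU Uy.
    exists y, (maxn j k); split.
      by apply: subset_trans (cyl_trans Hy); apply: cyl_mono; rewrite leq_maxr.
    move=> z Hz [nUz _]; apply: nUz; apply: Hj; apply: cyl_mono Hz.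
    by rewrite leq_maxl.
  exists x, k; split => // z Hz [_ nVz]; apply: nVz; exists k => w Hw Uw.
  by apply: nex; exists w; split => //; apply: cyl_trans Hw.
- move=> A HA; have [U HU] := choice HA.
  exists (\bigcup_n U n); split.
    by apply: bigcup_open => n _; exact: (HU n).1.
  apply: (@meager_sub _ (\bigcup_n ((A n `\` U n) `|` (U n `\` A n)))).
    move=> x [[[n _ Ax] nUx]|[[n _ Ux] nAx]].
      by exists n => //; left; split => // Ux; apply: nUx; exists n.
    by exists n => //; right; split => // Ax; apply: nAx; exists n.
  by apply: meager_bigU => n; exact: (HU n).2.
Qed.

Lemma xor_flip X n x : xor_set X -> X (flip x n) <-> ~ X x.
Proof.
move=> H; have := H n (flip x n); rewrite flipK => ->.
split; first by move=> h; exact: h.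
by move=> h; apply: contrapT.
Qed.

Lemma xor_not_meager X x k : xor_set X ->
  ~ meager (cyl x k `&` X) /\ ~ meager (cyl x k `\` X).
Proof.
move=> HX.
have cf : forall y, cyl x k y -> cyl x k (flip y k).
  move=> y Hy i Hi; rewrite /flip; case: eqP => [e|_]; last exact: Hy.
  by rewrite e ltnn in Hi.
split => Hm; apply: (@baire x k).
- have Hm2 := meager_flip _ k Hm.
  apply: (@meager_sub _ ((cyl x k `&` X) `|` (flip^~ k @^-1` (cyl x k `&` X)))).
    move=> y Hy; case: (pselect (X y)) => Xy; first by left.
    by right; split; [exact: cf|apply/(xor_flip _ _ _ HX)].
  exact: meagerU.
- have Hm2 := meager_flip _ k Hm.
  apply: (@meager_sub _ ((cyl x k `\` X) `|` (flip^~ k @^-1` (cyl x k `\` X)))).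
    move=> y Hy; case: (pselect (X y)) => Xy; last by left.
    right; split; first exact: cf.
    by move/(xor_flip _ _ _ HX).
  exact: meagerU.
Qed.

Theorem proposition13 (X : set cantor_space) :
  xor_set X -> maximal_thin X /\ ~ borel_cantor X.
Proof.
move=> HX.
have thinX : thin X.
  move=> n x y Xx Xy H; apply: funext => i.
  case: (eqVneq i n) => [->|ne]; last by apply: H => e; rewrite e eqxx in ne.
  case: (eqVneq (x n) (y n)) => // ne; exfalso.
  have e : y = flip x n.
    apply: funext => m; rewrite /flip; case: eqP => [->|me]; last by rewrite H.
    by move: ne; case: (x n); case: (y n).
  by move: Xx; rewrite (HX n) -e.
split; first split => //.
  move=> Y thinY XY; apply/seteqP; split => // y Yy.
  case: (pselect (X y)) => // nXy.
  have Xf : X (flip y 0) by apply/(xor_flip _ _ _ HX).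
  have e : flip y 0 = y.
    apply: (thinY 0%N) => //; first exact: XY.
    by move=> m ne; rewrite /flip; case: eqP.
  by rewrite -e.
move=> BX.
have hsub : (open : set (set cantor_space)) `<=` BP.
  move=> A oA; exists A; split => //.
  apply: (@meager_sub _ set0); first by move=> x [[]|[]].
  by apply: nwd_meager => x k; exists x, k; split => // z _ [].
have [U [oU mU]] := smallest_sub BP_sigma hsub BX.
case: (pselect (exists x, U x)) => [[x Ux]|nU].
  have [k Hk] := open_cyl oU Ux.
  have [_ h] := xor_not_meager _ x k HX; apply: h.
  apply: meager_sub mU => y [Hy nXy]; right; split => //; exact: Hk.
have [h _] := xor_not_meager _ (fun _ => false) 0%N HX; apply: h.
apply: meager_sub mU => y [_ Xy]; left; split => // Uy; apply: nU; by exists y.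
Qed.
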